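(* Let $d\geq 1$ be odd, and let $Q$ be a real hyperbolic polynomial of degree $d$ with positive leading coefficient and nonzero constant term. - If $Q$ defines the moduli order admitting equalities $r_{PP}^0$, then all coefficients of $Q$ are nonzero and $Q$ defines the sign pattern $\Sigma_-$. - If $Q$ defines $r_{NN}^0$, then all coefficients of $Q$ are nonzero and $Q$ defines the sign pattern $\Sigma_+$.
   Context: A hyperbolic polynomial (HP) is a real univariate polynomial all of whose roots are real. A moduli order admitting equalities (MOAE) of length $d$ is a string of $d$ letters $P$/$N$ separated by $\leq$. A HP $Q$ of degree $d$ with nonzero constant term defines such a string if its $d$ roots, counted with multiplicity, can be listed as $z_1,\dots,z_d$ with $|z_1|\leq|z_2|\leq\dots\leq|z_d|$, where $z_i>0$ when the $i$-th letter is $P$ and $z_i<0$ when it is $N$. $r_{PP}^0$ is the alternating string $P\leq N\leq P\leq N\leq\dots\leq P$ (odd length, beginning and ending with $P$). $r_{NN}^0$ is $N\leq P\leq N\leq\dots\leq N$ (odd length, beginning and ending with $N$). The sign pattern of a polynomial $a_dx^d+\dots+a_0$ with all $a_j\neq 0$ is $(\mathrm{sgn}(a_d),\dots,\mathrm{sgn}(a_0))$. $\Sigma_+=(+,+,-,-,+,+,-,-,\dots)$ has entry $+$ in position $k$ ($k=0,\dots,d$, i.e. the sign of the coefficient of $x^{d-k}$) iff $k\equiv0,1\pmod 4$. $\Sigma_-=(+,-,-,+,+,-,-,+,\dots)$ has entry $+$ in position $k$ iff $k\equiv 0,3\pmod 4$. *)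

(* Defs.v *)
From HB Require Import structures.
From mathcomp Require Import all_boot all_order all_algebra.
From mathcomp Require Import reals.
Set Implicit Arguments. Unset Strict Implicit. Unset Printing Implicit Defensive.
Import Order.TTheory GRing.Theory Num.Theory.
Local Open Scope ring_scope.

Definition hyperbolic (R : realType) (Q : {poly R}) : Prop :=
  exists s : seq R, Q = lead_coef Q *: \prod_(z <- s) ('X - z%:P).

(* A moduli order admitting equalities: a string of letters P/N,
   encoded as a seq bool with true = P and false = N. *)
Definition MOAE := seq bool.

Definition defines_MOAE (R : realType) (Q : {poly R}) (m : MOAE) : Prop :=
  exists z : seq R,
    [/\ size z = size m,
        Q = lead_coef Q *: \prod_(x <- z) ('X - x%:P),
        sorted (fun x y : R => `|x| <= `|y|) z &
        forall i, (i < size m)%N ->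
          if nth false m i then 0 < nth 0 z i else nth 0 z i < 0].

(* r_PP^0 of length d: P <= N <= P <= ... (letter i, 0-indexed, is P iff i even). *)
Definition r_PP0 (d : nat) : MOAE := mkseq (fun i => ~~ odd i) d.
(* r_NN^0 of length d: N <= P <= N <= ... (letter i is P iff i odd). *)
Definition r_NN0 (d : nat) : MOAE := mkseq (fun i => odd i) d.

(* Sign patterns, as predicates on position k = 0..d (sign of coeff of x^(d-k)). *)
Definition Sigma_plus (k : nat) : bool := (k %% 4 == 0)%N || (k %% 4 == 1)%N.
Definition Sigma_minus (k : nat) : bool := (k %% 4 == 0)%N || (k %% 4 == 3)%N.

Definition defines_sign_pattern (R : realType) (Q : {poly R}) (d : nat)
    (sigma : nat -> bool) : Prop :=
  forall k, (k <= d)%N ->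
    if sigma k then 0 < Q`_(d - k) else Q`_(d - k) < 0.

(* Main.v *)
Require Import Defs.
From HB Require Import structures.
From mathcomp Require Import all_boot all_order all_algebra.
From mathcomp Require Import reals.
From mathcomp Require Import zify ring lra.
Import Order.TTheory GRing.Theory Num.Theory.
Local Open Scope ring_scope.

Lemma Sp_S k : Sigma_plus k.+1 = Sigma_minus k.
Proof.
rewrite /Sigma_plus /Sigma_minus -addn1 -modnDml.
have := ltn_pmod k (isT : (0 < 4)%N); case: (k %% 4)%N => [|[|[|[|r]]]] //.
Qed.

Lemma Sm_S k : Sigma_minus k.+1 = ~~ Sigma_plus k.
Proof.
rewrite /Sigma_plus /Sigma_minus -addn1 -modnDml.
have := ltn_pmod k (isT : (0 < 4)%N); case: (k %% 4)%N => [|[|[|[|r]]]] //.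
Qed.

Lemma Sm_Sp k : Sigma_minus k = (if odd k then ~~ Sigma_plus k else Sigma_plus k).
Proof.
rewrite /Sigma_plus /Sigma_minus -(odd_mod k (erefl : odd 4 = false)).
have := ltn_pmod k (isT : (0 < 4)%N); case: (k %% 4)%N => [|[|[|[|r]]]] //.
Qed.

Lemma step_abs (R : realType) (n : nat) (M a : R) (u v : nat -> R) :
 0 <= M -> M <= a -> 0 < a ->
 (forall k, (n < k)%N -> u k = 0) ->
 (forall k, (k <= n)%N -> 0 <= u k) ->
 (forall k, (k <= n)%N -> odd n || ~~ odd k -> 0 < u k) ->
 (forall k, odd k -> (k <= n)%N -> u k <= M * u k.-1 /\ (~~ odd n -> u k < M * u k.-1)) ->
 v 0 = u 0 ->
 (forall k, v k.+1 = (if odd k then u k.+1 else - u k.+1) + a * u k) ->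
 (forall k, (k <= n.+1)%N -> 0 <= v k /\ (odd n.+1 || ~~ odd k -> 0 < v k)) /\
 (forall k, odd k -> (k <= n.+1)%N -> v k <= a * v k.-1 /\ (~~ odd n.+1 -> v k < a * v k.-1)).
Proof.
move=> M0 Ma a0 u0 uge upos uB v0 vS.
have ug : forall k, 0 <= u k.
  move=> k; case: (leqP k n) => H; first exact: uge.
  by rewrite u0.
have vu : forall k, ~~ odd k -> u k <= v k.
  case=> [|k] /= ok; first by rewrite v0.
  rewrite vS (negbNE ok).
  have := ug k; nra.
have u0p : 0 < u 0 by apply: upos; rewrite ?orbT.
split.
  case=> [|k] Hk; first by rewrite v0; split; [exact: ltW|].
  rewrite vS; case: (boolP (odd k)) => ok.
    have H : 0 < u k.+1 \/ 0 < u k.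
      case: (boolP (odd n)) => on.
        by right; apply: upos; rewrite ?on //; lia.
      left; apply: upos; last by rewrite /= ok orbT.
      have : k != n by apply/eqP => E; rewrite E (negbTE on) in ok.
      move/eqP; lia.
    have := ug k; have := ug k.+1.
    by case: H => H; split; nra.
  case: (leqP k.+1 n) => H.
    have [B1 B2] := uB k.+1 ok H; rewrite /= in B1 B2.
    have := ug k; have := ug k.+1.
    split; first nra.
    move=> /= Ho; rewrite ok orbF in Ho.
    have := B2 Ho; nra.
  rewrite u0 //.
  have : 0 < u k by apply: upos; rewrite ?ok ?orbT //; lia.
  split; nra.
case=> [|k] //= ok Hk.
rewrite vS (negbTE ok).
have vk := vu k ok.
have g1 := ug k; have g2 := ug k.+1.
split; first nra.
move=> on; rewrite /= negbK in on.
have : 0 < u k.+1.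
  apply: upos; last by rewrite on.
  case: (leqP k.+1 n) => // Hn.
  have E : n = k by lia.
  by rewrite E (negbTE ok) in on.
nra.
Qed.

Section S.
Variable R : realType.

Fixpoint cf (l : seq R) (k : nat) : R :=
  match l with
  | [::] => (k == 0)%:R
  | x :: l' => match k with 0 => cf l' 0 | k'.+1 => cf l' k - x * cf l' k' end
  end.

Lemma cf_big l k : (size l < k)%N -> cf l k = 0.
Proof.
elim: l k => [|x l IH] [|k] //= H.
by rewrite (IH k.+1) ?(IH k) ?mulr0 ?subr0 //=; lia.
Qed.

Lemma coef_prod l i :
  (\prod_(x <- l) ('X - x%:P))`_i = if (i <= size l)%N then cf l (size l - i) else 0.
Proof.
elim: l i => [|x l IH] i.
  by rewrite big_nil coef1 /=; case: i.
rewrite big_cons mulrBl coefB coefXM coefCM /=.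
set p := \prod_(_ <- l) _ in IH *.
case: i => [|j] /=.
  by rewrite IH leq0n !subn0 (@cf_big _ (size l).+1) // sub0r subr0.
rewrite !IH subSS ltnS.
case: (ltngtP j (size l)) => H.
- have E : (size l - j = (size l - j.+1).+1)%N by lia.
  by rewrite E.
- by rewrite mulr0 subr0.
- by rewrite H subnn mulr0 subr0.
Qed.

Definition sgv (b : bool) (r : R) := if b then r else - r.
Definition pat (n : nat) := if odd n then Sigma_minus else Sigma_plus.
Definition Mh (l : seq R) := if l is x :: _ then `|x| else 0.
Definition good (l : seq R) :=
  sorted (fun x y : R => `|y| <= `|x|) l /\
  forall i, (i < size l)%N ->
    if ~~ odd (size l - i.+1) then 0 < nth 0 l i else nth 0 l i < 0.
Definition Inv (l : seq R) :=
  (forall k, (k <= size l)%N -> 0 <= sgv (pat (size l) k) (cf l k) /\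
       (odd (size l) || ~~ odd k -> 0 < sgv (pat (size l) k) (cf l k))) /\
  (forall k, odd k -> (k <= size l)%N ->
       `|cf l k| <= Mh l * `|cf l k.-1| /\
       (~~ odd (size l) -> `|cf l k| < Mh l * `|cf l k.-1|)).

Lemma sgv_norm b r : 0 <= sgv b r -> `|r| = sgv b r.
Proof. by case: b => /= H; [rewrite ger0_norm | rewrite ler0_norm // -oppr_ge0]. Qed.

Lemma step_inv (x : R) (l : seq R) : Inv l -> Mh l <= `|x| ->
  (if odd (size l) then x < 0 else 0 < x) -> Inv (x :: l).
Proof.
move=> [IS IB] Mx sx.
set n := size l.
have M0 : 0 <= Mh l by case: l {IS IB Mx sx n} => //= y _.
have x0 : 0 < `|x|.
  by rewrite normr_gt0; case: (odd n) sx => H; [rewrite ltr0_neq0 | rewrite gt_eqF].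
have := @step_abs R n (Mh l) `|x| (fun k => sgv (pat n k) (cf l k))
   (fun k => sgv (pat n.+1 k) (cf (x :: l) k)) M0 Mx x0.
case.
- by move=> k Hk /=; rewrite cf_big //; case: (pat n k); rewrite /= ?oppr0.
- by move=> k Hk; case: (IS k Hk).
- by move=> k Hk; case: (IS k Hk).
- move=> k ok Hk /=; have [B1 B2] := IB k ok Hk.
  have Hk1 : (k.-1 <= n)%N by lia.
  have E1 : `|cf l k| = sgv (pat n k) (cf l k) by apply: sgv_norm; case: (IS _ Hk).
  have E2 : `|cf l k.-1| = sgv (pat n k.-1) (cf l k.-1) by apply: sgv_norm; case: (IS _ Hk1).
  by rewrite -E1 -E2; split.
- by rewrite /pat; case: (odd n); case: (odd n.+1).
- move=> k /=.
  rewrite /pat /=.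
  case: (boolP (odd n)) sx => on sx /=.
    have -> : `|x| = - x by rewrite ltr0_norm.
    rewrite Sp_S Sm_S Sm_Sp.
    by case: (odd k); case: (Sigma_plus k); rewrite /sgv /=; ring.
  have -> : `|x| = x by rewrite gtr0_norm.
  rewrite Sp_S Sm_S Sm_Sp.
  by case: (odd k); case: (Sigma_plus k); rewrite /sgv /=; ring.
move=> VS VB; split; first exact: VS.
move=> k ok Hk; have [B1 B2] := VB k ok Hk.
have Hk1 : (k.-1 <= n.+1)%N by exact: leq_trans (leq_pred k) Hk.
have E1 : `|cf (x :: l) k| = sgv (pat n.+1 k) (cf (x :: l) k) by apply: sgv_norm; case: (VS _ Hk).
have E2 : `|cf (x :: l) k.-1| = sgv (pat n.+1 k.-1) (cf (x :: l) k.-1) by apply: sgv_norm; case: (VS _ Hk1).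
rewrite /= in B1 B2; rewrite E1 E2; split => //.
Qed.

Lemma inv_nil : Inv [::].
Proof.
split; last by move=> [|k].
move=> k; rewrite leqn0 => /eqP ->.
rewrite /pat /sgv /=; split => [|_]; [exact: ler01 | exact: ltr01].
Qed.

Lemma good_inv l : good l -> Inv l.
Proof.
elim: l => [|x l IH]; first by move=> _; exact: inv_nil.
move=> [Hs Hn].
apply: step_inv.
- apply: IH; split; first exact: (path_sorted Hs).
  move=> i Hi; have := Hn i.+1 Hi; rewrite /= subSS; exact.
- by case: l {IH Hn} Hs => //= y l /andP [].
- have := Hn 0%N (ltn0Sn _); rewrite /= subn1 /=.
  by case: (odd (size l)).
Qed.

Lemma cf_neg l k : cf (map -%R l) k = (-1) ^+ k * cf l k.
Proof.
elim: l k => [|x l IH] [|k] /=.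
- by rewrite mul1r.
- by rewrite mulr0.
- by rewrite IH mul1r.
- by rewrite !IH exprS; ring.
Qed.
End S.
Arguments cf {R}. Arguments sgv {R}. Arguments good {R}. Arguments Inv {R}. Arguments Mh {R}. Arguments good_inv {R}. Arguments pat : clear implicits.

Theorem theorem1p10 (R : realType) (d : nat) (Q : {poly R}) :
  (1 <= d)%N -> odd d ->
  hyperbolic Q ->
  size Q = d.+1 ->
  0 < lead_coef Q ->
  Q`_0 != 0 ->
  (defines_MOAE Q (r_PP0 d) ->
     (forall j, (j <= d)%N -> Q`_j != 0) /\ defines_sign_pattern Q d Sigma_minus) /\
  (defines_MOAE Q (r_NN0 d) ->
     (forall j, (j <= d)%N -> Q`_j != 0) /\ defines_sign_pattern Q d Sigma_plus).
Proof.
move=> d1 od _ _ lc0 _.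
have coefQ : forall z : seq R, size z = d ->
    Q = lead_coef Q *: \prod_(x <- z) ('X - x%:P) ->
    forall k, (k <= d)%N -> Q`_(d - k) = lead_coef Q * cf (rev z) k.
  move=> z sz EQ k Hk.
  rewrite {1}EQ coefZ -big_rev coef_prod size_rev sz leq_subr subKn //.
have fin : forall (s : nat -> bool) (c : nat -> R),
    (forall k, (k <= d)%N -> 0 < sgv (s k) (c k)) ->
    (forall k, (k <= d)%N -> Q`_(d - k) = lead_coef Q * c k) ->
    (forall j, (j <= d)%N -> Q`_j != 0) /\ defines_sign_pattern Q d s.
  move=> s c Hs Hc; split.
    move=> j Hj; have Hk : (d - j <= d)%N by lia.
    have := Hc _ Hk; rewrite subKn // => ->.
    have Hc0 : c (d - j)%N != 0.
      by have := Hs _ Hk; case: (s _) => /= H; [exact: lt0r_neq0 | rewrite -oppr_eq0; exact: lt0r_neq0].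
    by rewrite mulf_neq0 // lt0r_neq0.
  move=> k Hk; rewrite Hc //; have := Hs _ Hk; case: (s k) => /= H.
    by rewrite mulr_gt0.
  by rewrite pmulr_rlt0 // -oppr_gt0.
split.
  move=> [z [sz EQ so sg]].
  rewrite size_mkseq in sz sg.
  have gd : good (rev z).
    split; first by rewrite rev_sorted.
    move=> i; rewrite size_rev sz => Hi; rewrite nth_rev sz //.
    have := sg (d - i.+1)%N ltac:(lia); rewrite nth_mkseq //; lia.
  have [IS _] := good_inv _ gd.
  apply: (fin _ (cf (rev z))); last exact: coefQ.
  move=> k Hk; rewrite size_rev sz in IS; have [_ H] := IS k Hk.
  by move: H; rewrite /pat od /=; apply.
move=> [z [sz EQ so sg]].
rewrite size_mkseq in sz sg.
set l := map -%R (rev z).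
have gd : good l.
  split.
    rewrite /l sorted_map rev_sorted.
    by apply: sub_sorted so => a b /=; rewrite !normrN.
  move=> i; rewrite /l size_map size_rev sz => Hi.
  rewrite (nth_map 0) ?size_rev ?sz // nth_rev sz //.
  have := sg (d - i.+1)%N ltac:(lia); rewrite nth_mkseq; last lia.
  by rewrite oppr_gt0 oppr_lt0; case: (odd _).
have [IS _] := good_inv _ gd.
have Erev : rev z = map -%R l by rewrite /l mapK //; exact: opprK.
apply: (fin _ (cf (rev z))); last exact: coefQ.
move=> k Hk; rewrite /l size_map size_rev sz in IS; have [_ H] := IS k Hk.
move: H; rewrite -/l /pat od /= => /(_ isT).
rewrite Erev cf_neg -signr_odd Sm_Sp.
by case: (odd k); case: (Sigma_plus k); rewrite /sgv /= ?expr0 ?expr1 ?mul1r ?mulN1r ?opprK.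
Qed.
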